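(* Let $n\geq 3$ and $c\geq 1$, and let $\upsilon: UV_n(c)\to \mathrm{GL}_n(\mathbb{C})$ be a nontrivial homogeneous $2$-local representation. Then, up to equivalence of representations, $\upsilon$ is given by \[ \upsilon(\rho_i)=\begin{pmatrix} I_{i-1}&0&0\\ 0&\begin{pmatrix}0&r_2\\ \frac{1}{r_2}&0\end{pmatrix}&0\\ 0&0&I_{n-i-1}\end{pmatrix},\qquad \upsilon(\sigma_{i,t})=\begin{pmatrix} I_{i-1}&0&0\\ 0&\begin{pmatrix}s_{1,t}&s_{2,t}\\ s_{3,t}&s_{4,t}\end{pmatrix}&0\\ 0&0&I_{n-i-1}\end{pmatrix} \] for all $1\le i\le n-1$ and $1\le t\le c$, where $r_2,s_{1,t},s_{2,t},s_{3,t},s_{4,t}\in\mathbb{C}$ satisfy $r_2\neq 0$ and $s_{1,t}s_{4,t}-s_{2,t}s_{3,t}\neq 0$.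
   Context: For $n\ge 2$, $c\ge 1$, the universal virtual braid group $UV_n(c)$ is the group with generators $\rho_i$ ($1\le i\le n-1$) and $\sigma_{i,t}$ ($1\le i\le n-1$, $1\le t\le c$) and relations: $\rho_i\rho_{i+1}\rho_i=\rho_{i+1}\rho_i\rho_{i+1}$ ($1\le i\le n-2$); $\rho_i\rho_j=\rho_j\rho_i$ ($|i-j|\ge 2$); $\rho_i^2=1$; $\sigma_{i,t}\sigma_{j,\ell}=\sigma_{j,\ell}\sigma_{i,t}$ ($|i-j|\ge2$, $1\le t,\ell\le c$); $\sigma_{i,t}\rho_j=\rho_j\sigma_{i,t}$ ($|i-j|\ge 2$); $\rho_i\rho_{i+1}\sigma_{i,t}=\sigma_{i+1,t}\rho_i\rho_{i+1}$ ($1\le i\le n-2$, $1\le t\le c$). A representation $\theta:UV_n(c)\to\mathrm{GL}_{n}(\mathbb{C})$ is called homogeneous $2$-local if there are matrices $R, S_1,\dots,S_c\in \mathrm{GL}_2(\mathbb{C})$ such that for all $i,t$, $\theta(\rho_i)=\mathrm{diag}(I_{i-1},R,I_{n-i-1})$ and $\theta(\sigma_{i,t})=\mathrm{diag}(I_{i-1},S_t,I_{n-i-1})$ (block diagonal), where $I_r$ is the $r\times r$ identity matrix. It is nontrivial if it is not the trivial representation (all generators sent to the identity). Two representations are equivalent if they are conjugate by a fixed invertible matrix. *)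

(* Defs.v *)
From HB Require Import structures.
From mathcomp Require Import all_boot all_order all_algebra.
From mathcomp Require Import complex Rstruct.
Set Implicit Arguments. Unset Strict Implicit. Unset Printing Implicit Defensive.
Import Order.TTheory GRing.Theory Num.Theory.
Local Open Scope ring_scope.

Definition C : fieldType := Rdefinitions.R[i].

Definition mx2 (F : nzRingType) (a b c d : F) : 'M[F]_2 :=
  \matrix_(j < 2, k < 2)
    if (j == 0 :> nat) then (if (k == 0 :> nat) then a else b)
    else (if (k == 0 :> nat) then c else d).

(* diag(I_{i-1}, A, I_{n-i-1}) for 1 <= i <= n-1 (paper's 1-based indexing):
   the 2x2 block A occupies (0-based) rows/columns i-1 and i. *)
Definition loc2 (F : nzRingType) (n i : nat) (A : 'M[F]_2) : 'M[F]_n :=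
  \matrix_(j < n, k < n)
    if [&& (i.-1 <= j)%N, (j <= i)%N, (i.-1 <= k)%N & (k <= i)%N]
    then A (inord (j - i.-1)) (inord (k - i.-1))
    else (j == k)%:R.

Definition far (i j : nat) : bool := (i + 2 <= j)%N || (j + 2 <= i)%N.

(* The assignment rho_i |-> loc2 n i R, sigma_{i,t} |-> loc2 n i (S t)
   (1 <= i <= n-1, t : 'I_c standing for 1 <= t+1 <= c) respects all the
   defining relations of UV_n(c), i.e. defines a homogeneous 2-local
   representation UV_n(c) -> GL_n(C) with R, S_t in GL_2(C). *)
Definition homog_2local_rep (n c : nat) (R : 'M[C]_2) (S : 'I_c -> 'M[C]_2) : Prop :=
  let rho i := loc2 n i R in
  let sigma i t := loc2 n i (S t) in
  R \in unitmx /\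
      (forall t, S t \in unitmx) /\
      (forall i, (1 <= i)%N -> (i <= n - 2)%N ->
         rho i *m rho i.+1 *m rho i = rho i.+1 *m rho i *m rho i.+1) /\
      (forall i j, (1 <= i <= n - 1)%N -> (1 <= j <= n - 1)%N -> far i j ->
         rho i *m rho j = rho j *m rho i) /\
      (forall i, (1 <= i <= n - 1)%N -> rho i *m rho i = 1%:M) /\
      (forall i j t l, (1 <= i <= n - 1)%N -> (1 <= j <= n - 1)%N -> far i j ->
         sigma i t *m sigma j l = sigma j l *m sigma i t) /\
      (forall i j t, (1 <= i <= n - 1)%N -> (1 <= j <= n - 1)%N -> far i j ->
         sigma i t *m rho j = rho j *m sigma i t) /\
      (forall i t, (1 <= i)%N -> (i <= n - 2)%N ->
         rho i *m rho i.+1 *m sigma i t = sigma i.+1 t *m rho i *m rho i.+1).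

Definition nontrivial_rep (n c : nat) (R : 'M[C]_2) (S : 'I_c -> 'M[C]_2) : Prop :=
  ~ ((forall i, (1 <= i <= n - 1)%N -> loc2 n i R = 1%:M) /\
     (forall i t, (1 <= i <= n - 1)%N -> loc2 n i (S t) = 1%:M)).

Arguments homog_2local_rep : clear implicits.
Arguments nontrivial_rep : clear implicits.

(* Main.v *)
Require Import Defs.
From HB Require Import structures.
From mathcomp Require Import all_boot all_order all_algebra.
From mathcomp Require Import complex Rstruct zify ring.
Import Order.TTheory GRing.Theory Num.Theory.
Local Open Scope ring_scope.
Definition o0 := @Ordinal 2 0 isT.
Definition o1 := @Ordinal 2 1 isT.
Lemma ord2P (P : 'I_2 -> Prop) : P o0 -> P o1 -> forall j, P j.
Proof. move=> h0 h1 [[|[|j]] Hj] //; first by rewrite (bool_irrelevance Hj isT).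
by rewrite (bool_irrelevance Hj isT). Qed.
Lemma mx2E (A : 'M[C]_2) : A = mx2 (A o0 o0) (A o0 o1) (A o1 o0) (A o1 o1).
Proof. by apply/matrixP; elim/ord2P; elim/ord2P; rewrite mxE. Qed.
Lemma det2 (A : 'M[C]_2) : \det A = A o0 o0 * A o1 o1 - A o0 o1 * A o1 o0.
Proof.
rewrite (expand_det_row _ ord0) !big_ord_recr big_ord0 /= /cofactor !det_mx11 !mxE /=.
have e1 : widen_ord (m:=2) (leqnSn 1) ord_max = o0 by apply: val_inj.
have e2 : lift (ord0 : 'I_2) 0 = o1 by apply: val_inj.
have e3 : lift (ord_max : 'I_2) 0 = o0 by apply: val_inj.
have e4 : (ord_max : 'I_2) = o1 by apply: val_inj.
have e5 : (ord0 : 'I_2) = o0 by apply: val_inj.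
rewrite e1 e2 e3 e4 e5 /= expr0 expr1.
rewrite (_ : lift o0 0 = o1); last by apply: val_inj.
ring.
Qed.
Lemma loc2_1 n i : (1 <= i)%N -> loc2 n i (1%:M : 'M[C]_2) = 1%:M.
Proof.
move=> i1; apply/matrixP=> j k; rewrite !mxE.
case: ifP => [/and4P[h1 h2 h3 h4]|] //.
rewrite -val_eqE /= !inordK; try lia.
congr (_%:R); rewrite -[j == k]val_eqE /=; apply/eqP/eqP; lia.
Qed.
Lemma two_neq0 : (2%:R : C) != 0.
Proof. have h : (2%:R : Rdefinitions.R[i]) != 0 by rewrite pnatr_eq0. exact h. Qed.
Lemma tr (x y u v : C) : x = y -> x - y = u - v -> u = v.
Proof. move=> -> /eqP; rewrite subrr eq_sym subr_eq0 => /eqP //. Qed.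
Lemma z0 (x y : C) : x = y -> x - y = 0. Proof. by move=> ->; rewrite subrr. Qed.
Lemma key (a b c d : C) : a*a+b*c = 1 -> a*b+b*d = 0 -> c*a+d*c = 0 -> c*b+d*d = 1 ->
  a*a+a*b*c = a -> d = c*d*b + d*d ->
  (a = 1 /\ b = 0 /\ c = 0 /\ d = 1) \/ (a = 0 /\ d = 0 /\ b*c = 1).
Proof.
move=> /z0 E1 /z0 E2 /z0 E3 /z0 E4 /z0 E5 /z0 E6.
have [hs|hs] := eqVneq (a+d) 0.
- have ha : a = - d by apply/eqP; rewrite -addr_eq0; apply/eqP.
  have h2 : 2%:R * d^+3 = 0.
    rewrite -[RHS](_ : (a*a+a*b*c - a - a * (a*a+b*c - 1)) + (d - (c*d*b+d*d) + d*(c*b+d*d-1)) = 0).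
      rewrite ha; ring.
    by rewrite E5 E1 E6 E4; ring.
  move/eqP: h2; rewrite mulf_eq0 (negbTE two_neq0) /= expf_eq0 /= => /eqP hd.
  right; split; last split => //.
    by rewrite ha hd oppr0.
  by apply/eqP; rewrite -subr_eq0; rewrite -E1 ha hd; apply/eqP; ring.
- left.
  have hb : b = 0.
    apply/eqP; move: E2; rewrite (_ : a*b+b*d - 0 = b * (a+d)); last by ring.
    by move/eqP; rewrite mulf_eq0 (negbTE hs) orbF.
  have hc : c = 0.
    apply/eqP; move: E3; rewrite (_ : c*a+d*c - 0 = c * (a+d)); last by ring.
    by move/eqP; rewrite mulf_eq0 (negbTE hs) orbF.
  move: E1 E4 E5 E6; rewrite hb hc => E1 E4 E5 E6.
  have ha : a = 1.
    have : a * (a - 1) = 0 by rewrite -E5; ring.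
    move/eqP; rewrite mulf_eq0 subr_eq0 => /orP[/eqP a0|/eqP //].
    by move: E1; rewrite a0; move/eqP; rewrite (_ : 0*0+0*0-1 = -1 :> C); [rewrite oppr_eq0 oner_eq0|ring].
  have hd : d = 1.
    have : d * (d - 1) = 0 by rewrite -[RHS]oppr0 -E6; ring.
    move/eqP; rewrite mulf_eq0 subr_eq0 => /orP[/eqP a0|/eqP //].
    by move: E4; rewrite a0; move/eqP; rewrite (_ : 0*0+0*0-1 = -1 :> C); [rewrite oppr_eq0 oner_eq0|ring].
  by [].
Qed.
Lemma blk m i (A : 'M[C]_2) : (1 <= i <= 2)%N -> loc2 (3 + m) i A = block_mx (loc2 3 i A) 0 0 (1%:M : 'M_m).
Proof.
move=> /andP[i1 i2].
apply/matrixP=> j k; rewrite /loc2 !mxE.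
have -> : (j == k) = (nat_of_ord j == nat_of_ord k) by [].
case: (splitP j) => j1 Hj; rewrite mxE; case: (splitP k) => k1 Hk; rewrite ?mxE Hj Hk //=.
all: try (case: ifP => // /and4P [? ? ? ?]; lia).
- have -> : (nat_of_ord j1 == 3 + k1)%N = false by have := ltn_ord j1; lia.
  case: ifP => // /and4P [? ? ? ?]; lia.
- have -> : (3 + j1 == nat_of_ord k1)%N = false by have := ltn_ord k1; lia.
  case: ifP => // /and4P [? ? ? ?]; lia.
Qed.
Lemma blk' m i (A : 'M[C]_2) : (1 <= i <= 2)%N -> loc2 m.+3 i A = block_mx (loc2 3 i A) 0 0 (1%:M : 'M_m).
Proof. move=> h. have := @blk m i A h. move=> H. exact H. Qed.
Definition q (j : nat) (H : (j < 3)%N) := @Ordinal 3 j H.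
Lemma inord0' : (inord 0 : 'I_2) = o0. Proof. by apply: val_inj; rewrite /= inordK. Qed.
Lemma inord1' : (inord 1 : 'I_2) = o1. Proof. by apply: val_inj; rewrite /= inordK. Qed.
Lemma blk_eq m (X Y : 'M[C]_3) : block_mx X 0 0 (1%:M : 'M_m) = block_mx Y 0 0 1%:M -> X = Y.
Proof. by case/eq_block_mx. Qed.
Lemma bmul0 m (X Y : 'M[C]_3) : block_mx X 0 0 (1%:M : 'M_m) *m block_mx Y 0 0 1%:M = block_mx (X *m Y) 0 0 (1%:M : 'M_m).
Proof. by rewrite mulmx_block !mulmx0 !mul0mx !addr0 !add0r mulmx1. Qed.
Lemma bmul m (X Y : 'M[C]_3) : (block_mx X 0 0 (1%:M : 'M_m) : 'M_(m.+3)) *m (block_mx Y 0 0 1%:M : 'M_(m.+3)) = block_mx (X *m Y) 0 0 (1%:M : 'M_m).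
Proof. have H := @bmul0 m X Y. exact H. Qed.
Lemma b1 m : (1%:M : 'M[C]_(m.+3)) = block_mx (1%:M : 'M_3) 0 0 (1%:M : 'M_m).
Proof. have H := @scalar_mx_block C 3 m 1. exact H. Qed.
Lemma beq m (X Y : 'M[C]_3) : (block_mx X 0 0 (1%:M : 'M_m) : 'M_(m.+3)) = block_mx Y 0 0 1%:M -> X = Y.
Proof. move=> H. exact: (@blk_eq m X Y H). Qed.
Lemma bl1 m (R : 'M[C]_2) : loc2 m.+3 1 R = block_mx (loc2 3 1 R) 0 0 (1%:M : 'M_m).
Proof. exact: (blk' m 1 R isT). Qed.
Lemma bl2 m (R : 'M[C]_2) : loc2 m.+3 2 R = block_mx (loc2 3 2 R) 0 0 (1%:M : 'M_m).
Proof. exact: (blk' m 2 R isT). Qed.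
Lemma sq_entries (R : 'M[C]_2) : loc2 3 1 R *m loc2 3 1 R = 1%:M ->
  let a := R o0 o0 in let b := R o0 o1 in let c := R o1 o0 in let d := R o1 o1 in
  [/\ a*a+b*c = 1, a*b+b*d = 0, c*a+d*c = 0 & c*b+d*d = 1].
Proof.
move=> E a b c d.
have := congr1 (fun M : 'M[C]_3 => M (q 0 isT) (q 0 isT)) E; rewrite /= !mxE => e1.
have := congr1 (fun M : 'M[C]_3 => M (q 0 isT) (q 1 isT)) E; rewrite /= !mxE => e2.
have := congr1 (fun M : 'M[C]_3 => M (q 1 isT) (q 0 isT)) E; rewrite /= !mxE => e3.
have := congr1 (fun M : 'M[C]_3 => M (q 1 isT) (q 1 isT)) E; rewrite /= !mxE => e4.
move: e1 e2 e3 e4; rewrite !big_ord_recr !big_ord0 /= !mxE /= ?inord0' ?inord1' => e1 e2 e3 e4.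
by split; [apply: (tr _ _ _ _ e1)|apply: (tr _ _ _ _ e2)|apply: (tr _ _ _ _ e3)|apply: (tr _ _ _ _ e4)]; rewrite /a /b /c /d; ring.
Qed.
Lemma br_entries (R : 'M[C]_2) :
  loc2 3 1 R *m loc2 3 2 R *m loc2 3 1 R = loc2 3 2 R *m loc2 3 1 R *m loc2 3 2 R ->
  let a := R o0 o0 in let b := R o0 o1 in let c := R o1 o0 in let d := R o1 o1 in
  a*a+a*b*c = a /\ d = c*d*b + d*d.
Proof.
move=> E a b c d.
have := congr1 (fun M : 'M[C]_3 => M (q 0 isT) (q 0 isT)) E; rewrite /= !mxE => e1.
have := congr1 (fun M : 'M[C]_3 => M (q 2 isT) (q 2 isT)) E; rewrite /= !mxE => e2.
move: e1 e2; rewrite !big_ord_recr !big_ord0 /= !mxE /= !big_ord_recr !big_ord0 /= !mxE /= ?inord0' ?inord1' => e1 e2.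
by split; [apply: (tr _ _ _ _ e1)|apply: (tr _ _ _ _ e2)]; rewrite /a /b /c /d; ring.
Qed.
Lemma mix_entries (S : 'M[C]_2) : loc2 3 1 S = loc2 3 2 S -> S = 1%:M.
Proof.
move=> E.
have := congr1 (fun M : 'M[C]_3 => M (q 0 isT) (q 0 isT)) E; rewrite /= !mxE => e1.
have := congr1 (fun M : 'M[C]_3 => M (q 0 isT) (q 1 isT)) E; rewrite /= !mxE => e2.
have := congr1 (fun M : 'M[C]_3 => M (q 1 isT) (q 0 isT)) E; rewrite /= !mxE => e3.
have := congr1 (fun M : 'M[C]_3 => M (q 2 isT) (q 2 isT)) E; rewrite /= !mxE => e4.
move: e1 e2 e3 e4; rewrite /= ?inord0' ?inord1' => e1 e2 e3 e4.
have e4' : S o1 o1 = 1 by rewrite -e4.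
by apply/matrixP; elim/ord2P; elim/ord2P; rewrite !mxE /= ?e1 ?e2 ?e3 ?e4'.
Qed.

Theorem theorem3p1 (n c : nat) (hn : (3 <= n)%N) (hc : (1 <= c)%N)
  (R : 'M[C]_2) (S : 'I_c -> 'M[C]_2) :
  homog_2local_rep n c R S -> nontrivial_rep n c R S ->
  exists (P : 'M[C]_n) (r2 : C) (s1 s2 s3 s4 : 'I_c -> C),
    [/\ P \in unitmx, r2 != 0,
        (forall t, s1 t * s4 t - s2 t * s3 t != 0),
        (forall i, (1 <= i <= n - 1)%N ->
           P *m loc2 n i R *m invmx P = loc2 n i (mx2 0 r2 r2^-1 0)) &
        (forall i t, (1 <= i <= n - 1)%N ->
           P *m loc2 n i (S t) *m invmx P
           = loc2 n i (mx2 (s1 t) (s2 t) (s3 t) (s4 t)))].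
Proof.
move=> [Ru [Su [Hbr [_ [Hsq [_ [_ Hmix]]]]]]] Hnt.
case: n hn Hbr Hsq Hmix Hnt => [|[|[|m]]] // _ Hbr Hsq Hmix Hnt.
have Sq : loc2 3 1 R *m loc2 3 1 R = 1%:M.
  apply: (@beq m); rewrite -bmul -b1 -bl1; exact: Hsq.
have Br : loc2 3 1 R *m loc2 3 2 R *m loc2 3 1 R = loc2 3 2 R *m loc2 3 1 R *m loc2 3 2 R.
  apply: (@beq m); rewrite -!bmul -!bl1 -!bl2; exact: Hbr.
have [s1 s2 s3 s4] := sq_entries R Sq.
have [b1 b2] := br_entries R Br.
case: (key _ _ _ _ s1 s2 s3 s4 b1 b2) => [[ha [hb [hc' hd]]] | [ha [hd hbc]]].
- exfalso; apply: Hnt.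
  have R1 : R = 1%:M.
    by apply/matrixP; elim/ord2P; elim/ord2P; rewrite !mxE /= ?ha ?hb ?hc' ?hd.
  split => [i /andP[i1 _] | i t /andP[i1 _]]; first by rewrite R1 loc2_1.
  have St : S t = 1%:M.
    apply: mix_entries; apply: (@beq m _ _); rewrite -bl1 -bl2.
    have := Hmix 1%N t isT isT; rewrite R1 !loc2_1 // !mul1mx !mulmx1 //.
  by rewrite St loc2_1.
- have bnz : R o0 o1 != 0.
    apply/eqP => b0; move: hbc; rewrite b0 mul0r => /eqP; rewrite eq_sym oner_eq0.
    done.
  have hcb : R o1 o0 = (R o0 o1)^-1.
    have : R o1 o0 = (R o0 o1)^-1 * (R o0 o1 * R o1 o0) by rewrite mulrA mulVf // mul1r.
    by rewrite hbc mulr1.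
  exists 1%:M, (R o0 o1), (fun t => S t o0 o0), (fun t => S t o0 o1), (fun t => S t o1 o0), (fun t => S t o1 o1).
  split.
  + exact: unitmx1.
  + exact: bnz.
  + by move=> t; move: (Su t); rewrite unitmxE unitfE det2.
  + by move=> i _; rewrite invmx1 mul1mx mulmx1 {1}(mx2E R) ha hd hcb.
  + by move=> i t _; rewrite invmx1 mul1mx mulmx1 -mx2E.
Qed.
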